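(* Let $\xi,\eta>0$, $p>2$, and $\lambda>1$ with $\lambda^2\left(1-\frac{1}{\lambda^2}\right)^{p/2}\ge 1$, and let $t\in[0,1]$. For $(x_1,y_1)\in[0,1/\lambda]\times[0,1/\lambda]$ define $$F(x_1,y_1)=\lambda^p(\xi x_1+\eta t y_1)^p+\left(\xi^2+\eta^2t^2-2\eta\xi t x_1y_1+2\eta\xi t\sqrt{1-x_1^2}\sqrt{1-y_1^2}\right)^{p/2}.$$ Then $$\max\left\{F(x_1,y_1):0\le x_1,y_1\le\tfrac{1}{\lambda}\right\}\le\max\Big\{\left(1+\lambda^{-2p/(p-2)}\right)(\xi+\eta t)^p;\ (\xi+\eta t)^p+\left(\xi^2+\eta^2t^2-\tfrac{4\eta\xi t}{\lambda^2}+2\eta\xi t\right)^{p/2};\ (\xi+\eta)^p+(\xi+\eta t)^{p-2}\cdot\tfrac{2[\xi-(2\eta\xi-\eta)t]}{\lambda^2}\Big\}.$$ *)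

(* Defs.v *)
From Stdlib Require Import Reals.
Open Scope R_scope.

(* Real power a^b for a >= 0 (Stdlib's Rpower is only meaningful for a > 0;
   we set 0^b := 0, the correct value for b > 0, which is the only case used). *)
Definition rpow (a b : R) : R := if Rle_dec a 0 then 0 else Rpower a b.

Definition F (xi eta p lam t x1 y1 : R) : R :=
  rpow lam p * rpow (xi * x1 + eta * t * y1) p
  + rpow (xi ^ 2 + eta ^ 2 * t ^ 2 - 2 * eta * xi * t * x1 * y1
          + 2 * eta * xi * t * sqrt (1 - x1 ^ 2) * sqrt (1 - y1 ^ 2)) (p / 2).

(* Main.v *)
Require Import Defs.
From Stdlib Require Import Reals Lra Psatz.
Open Scope R_scope.

Lemma rpow_nonneg a b : 0 <= rpow a b.
Proof. unfold rpow; destruct (Rle_dec a 0); [lra|]. unfold Rpower; left; apply exp_pos. Qed.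

Lemma rpow_mono a c b : 0 <= b -> a <= c -> rpow a b <= rpow c b.
Proof.
  intros hb hac. unfold rpow at 1. destruct (Rle_dec a 0). apply rpow_nonneg.
  unfold rpow; destruct (Rle_dec c 0); [lra|]. apply Rle_Rpower_l; lra.
Qed.

Lemma rpow_pos_eq a b : 0 < a -> rpow a b = Rpower a b.
Proof. intros; unfold rpow; destruct (Rle_dec a 0); lra. Qed.

Lemma rpow_mul u v p : 0 <= u -> 0 <= v -> rpow u p * rpow v p = rpow (u*v) p.
Proof.
  intros hu hv. destruct hu as [hu|hu]; [destruct hv as [hv|hv]|].
  - rewrite !rpow_pos_eq; try nra. apply Rpower_mult_distr; lra.
  - subst. rewrite Rmult_0_r. unfold rpow at 2 3. destruct (Rle_dec 0 0); lra.
  - subst. rewrite Rmult_0_l. unfold rpow at 1 3. destruct (Rle_dec 0 0); lra.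
Qed.

Lemma rpow_sq u p : 0 <= u -> rpow u p = rpow (u^2) (p/2).
Proof.
  intros [hu|hu].
  - rewrite !rpow_pos_eq; try nra.
    replace (u^2) with (Rpower u (INR 2)) by (apply Rpower_pow; lra).
    rewrite Rpower_mult. f_equal. simpl. field.
  - subst. unfold rpow. destruct (Rle_dec 0 0); destruct (Rle_dec (0^2) 0); try lra.
    all: simpl in *; lra.
Qed.

Lemma bernoulli x q : 0 < x -> 1 <= q -> 1 + q*(x-1) <= Rpower x q.
Proof.
  intros hx hq.
  assert (h1 : 1 + (q-1) * ln x <= Rpower x (q-1)).
  { unfold Rpower. rewrite Rmult_comm. apply exp_ineq1_le. }
  assert (h2 : 1 + ln (/x) <= / x).
  { pose proof (exp_ineq1_le (ln (/x))). rewrite exp_ln in H; auto. apply Rinv_0_lt_compat; lra. }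
  rewrite ln_Rinv in h2 by lra.
  assert (h3 : x - 1 <= x * ln x).
  { assert (x * (1 - ln x) <= x * / x) by (apply Rmult_le_compat_l; lra).
    rewrite Rinv_r in H by lra. lra. }
  replace q with (1 + (q-1)) at 2 by ring. rewrite Rpower_plus, Rpower_1 by lra.
  assert (x * (1 + (q-1)*ln x) <= x * Rpower x (q-1)) by (apply Rmult_le_compat_l; lra).
  assert ((q-1)*(x-1) <= (q-1)*(x*ln x)) by (apply Rmult_le_compat_l; lra).
  nra.
Qed.

Lemma jensen2 A C th q : 0 < A -> 0 < C -> 0 <= th <= 1 -> 1 <= q ->
  Rpower (th*A + (1-th)*C) q <= th * Rpower A q + (1-th) * Rpower C q.
Proof.
  intros hA hC hth hq. set (M := th*A + (1-th)*C).
  assert (hM : 0 < M) by (unfold M; destruct (Req_dec th 0); nra).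
  assert (eA : Rpower A q = Rpower M q * Rpower (A/M) q).
  { rewrite Rpower_mult_distr; try (apply Rdiv_lt_0_compat; lra); auto. f_equal. field; lra. }
  assert (eC : Rpower C q = Rpower M q * Rpower (C/M) q).
  { rewrite Rpower_mult_distr; try (apply Rdiv_lt_0_compat; lra); auto. f_equal. field; lra. }
  pose proof (bernoulli (A/M) q ltac:(apply Rdiv_lt_0_compat; lra) hq) as bA.
  pose proof (bernoulli (C/M) q ltac:(apply Rdiv_lt_0_compat; lra) hq) as bC.
  assert (hPM : 0 < Rpower M q) by (unfold Rpower; apply exp_pos).
  rewrite eA, eC.
  assert (e : th * (1 + q*(A/M-1)) + (1-th)*(1+q*(C/M-1)) = 1).
  { unfold M in *. field. lra. }
  assert (th * (1 + q*(A/M-1)) <= th * Rpower (A/M) q) by (apply Rmult_le_compat_l; lra).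
  assert ((1-th) * (1 + q*(C/M-1)) <= (1-th) * Rpower (C/M) q) by (apply Rmult_le_compat_l; lra).
  assert (Rpower M q * 1 <= Rpower M q * (th * Rpower (A/M) q + (1-th) * Rpower (C/M) q)).
  { apply Rmult_le_compat_l; lra. }
  lra.
Qed.

Lemma core U V K G0 q : 1 <= q -> 0 < G0 <= K -> 0 <= U <= K -> V <= K -> U + V <= K + G0 ->
  rpow U q + rpow V q <= rpow K q + rpow G0 q.
Proof.
  intros hq hG hU hV hUV.
  destruct (Rle_dec V G0) as [hVG|hVG].
  - pose proof (rpow_mono U K q ltac:(lra) ltac:(lra)).
    pose proof (rpow_mono V G0 q ltac:(lra) hVG). lra.
  - assert (hKG : G0 < K) by lra.
    pose proof (rpow_mono U (K+G0-V) q ltac:(lra) ltac:(lra)).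
    set (th := (V - G0)/(K-G0)).
    assert (hth : 0 <= th <= 1).
    { unfold th; split. apply Rmult_le_pos; [lra| left; apply Rinv_0_lt_compat; lra].
      apply (Rmult_le_reg_r (K-G0)); [lra|]. unfold Rdiv. rewrite Rmult_assoc, Rinv_l; lra. }
    assert (eV : V = th*K + (1-th)*G0) by (unfold th; field; lra).
    assert (eW : K + G0 - V = (1-th)*K + (1-(1-th))*G0) by (rewrite eV; ring).
    rewrite (rpow_pos_eq V), (rpow_pos_eq (K+G0-V)) in * by lra.
    rewrite (rpow_pos_eq K), (rpow_pos_eq G0) by lra.
    pose proof (jensen2 K G0 th q ltac:(lra) ltac:(lra) hth hq).
    pose proof (jensen2 K G0 (1-th) q ltac:(lra) ltac:(lra) ltac:(lra) hq).
    rewrite <- eV in H0. rewrite <- eW in H1. lra.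
Qed.
Lemma lam2 lam p : 1 < lam -> 2 < p -> lam ^ 2 * rpow (1 - 1 / lam ^ 2) (p / 2) >= 1 -> 2 <= lam^2.
Proof.
  intros hl hp hc. set (w := 1 - 1/lam^2) in *.
  assert (hl2 : 1 < lam^2) by nra.
  assert (hw : 0 < w < 1).
  { unfold w. split. assert (1/lam^2 < 1). { apply (Rmult_lt_reg_r (lam^2)); [lra|]. unfold Rdiv. rewrite Rmult_assoc, Rinv_l; lra. } lra.
    assert (0 < 1/lam^2) by (apply Rdiv_lt_0_compat; lra). lra. }
  assert (hr : rpow w (p/2) <= w).
  { unfold rpow. destruct (Rle_dec w 0); [lra|]. unfold Rpower.
    assert (ln w < 0) by (rewrite <- ln_1; apply ln_increasing; lra).
    rewrite <- (exp_ln w) at 2 by lra. left; apply exp_increasing. nra. }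
  assert (lam^2 * w >= 1) by nra.
  unfold w in H. assert (lam^2 * (1 - 1/lam^2) = lam^2 - 1) by (field; lra). lra.
Qed.

Lemma key a b lam x y c : 0 <= a -> 0 <= b -> 0 < lam -> 2 <= lam^2 -> 0 <= x -> lam*x <= 1 ->
  0 <= y -> lam*y <= 1 -> c <= 1 - (x^2+y^2)/2 ->
  lam^2*(a*x+b*y)^2 + (a^2+b^2 - 2*a*b*x*y + 2*a*b*c) <= (a+b)^2 + (a^2+b^2 - 4*a*b/lam^2 + 2*a*b).
Proof.
  intros ha hb hl hl2 hx hlx hy hly hc.
  set (X := lam*x). set (Y := lam*y).
  assert (ex : x = X / lam) by (unfold X; field; lra).
  assert (ey : y = Y / lam) by (unfold Y; field; lra).
  assert (hX : 0 <= X) by (unfold X; nra). assert (hY : 0 <= Y) by (unfold Y; nra).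
  set (m := / lam^2).
  assert (hm : m * lam^2 = 1) by (unfold m; field; lra).
  assert (hm2 : 0 < m <= 1/2).
  { split. unfold m; apply Rinv_0_lt_compat; nra. nra. }
  assert (e1 : lam^2*(a*x+b*y)^2 = (a*X+b*Y)^2) by (rewrite ex, ey; field; lra).
  assert (e2 : x*y = m*X*Y) by (rewrite ex, ey; unfold m; field; lra).
  assert (e3 : x^2+y^2 = m*(X^2+Y^2)) by (rewrite ex, ey; unfold m; field; lra).
  assert (e4 : 4*a*b/lam^2 = 4*a*b*m) by (unfold m; field; lra).
  rewrite e1, e4.
  replace (2*a*b*x*y) with (2*a*b*(x*y)) by ring. rewrite e2. rewrite e3 in hc.
  assert (hab : 0 <= a*b) by nra.
  assert (hX1 : X <= 1) by (unfold X; lra). assert (hY1 : Y <= 1) by (unfold Y; lra).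
  assert (hX2 : X^2 <= 1) by nra. assert (hY2 : Y^2 <= 1) by nra.
  assert (hT : X^2 + Y^2 <= 2) by lra.
  assert (hXY : X*Y <= (X^2+Y^2)/2) by (pose proof (pow2_ge_0 (X-Y)); nra).
  assert (hin : X*Y*(1-m) + c <= 2 - 2*m).
  { assert ((X*Y)*(1-m) <= (X^2+Y^2)/2 * (1-m)) by (apply Rmult_le_compat_r; lra).
    assert ((X^2+Y^2)/2 * (1 - 2*m) <= 1 * (1 - 2*m)) by (apply Rmult_le_compat_r; lra). nra. }
  assert (a*b*(X*Y*(1-m) + c) <= a*b*(2-2*m)) by (apply Rmult_le_compat_l; lra).
  assert (a^2*X^2 <= a^2) by nra.
  assert (b^2*Y^2 <= b^2) by nra.
  nra.
Qed.

Theorem lemma2 (xi eta p lam t : R)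
  (hxi : 0 < xi) (heta : 0 < eta) (hp : 2 < p) (hlam : 1 < lam)
  (hcond : lam ^ 2 * rpow (1 - 1 / lam ^ 2) (p / 2) >= 1)
  (ht0 : 0 <= t) (ht1 : t <= 1) :
  forall x1 y1 : R, 0 <= x1 <= 1 / lam -> 0 <= y1 <= 1 / lam ->
  F xi eta p lam t x1 y1 <=
  Rmax ((1 + rpow lam (- (2 * p / (p - 2)))) * rpow (xi + eta * t) p)
   (Rmax (rpow (xi + eta * t) p
          + rpow (xi ^ 2 + eta ^ 2 * t ^ 2 - 4 * eta * xi * t / lam ^ 2
                  + 2 * eta * xi * t) (p / 2))
         (rpow (xi + eta) p
          + rpow (xi + eta * t) (p - 2)
            * (2 * (xi - (2 * eta * xi - eta) * t) / lam ^ 2))).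
Proof.
  intros x1 y1 hx hy.
  pose proof (lam2 lam p hlam hp hcond) as hl2.
  assert (hlx : lam * x1 <= 1).
  { destruct hx as [_ h]. apply (Rmult_le_compat_l lam) in h; [|lra].
    replace (lam * (1/lam)) with 1 in h by (field; lra). exact h. }
  assert (hly : lam * y1 <= 1).
  { destruct hy as [_ h]. apply (Rmult_le_compat_l lam) in h; [|lra].
    replace (lam * (1/lam)) with 1 in h by (field; lra). exact h. }
  assert (hb : 0 <= eta * t) by nra.
  assert (hx1 : x1^2 < 1) by nra. assert (hy1 : y1^2 < 1) by nra.
  set (u := sqrt (1 - x1^2)). set (v := sqrt (1 - y1^2)).
  assert (hu : u*u = 1 - x1^2) by (apply sqrt_sqrt; lra).
  assert (hv : v*v = 1 - y1^2) by (apply sqrt_sqrt; lra).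
  assert (huv : u*v <= 1 - (x1^2+y1^2)/2) by (pose proof (pow2_ge_0 (u-v)); nra).
  assert (hs : 0 <= xi * x1 + eta * t * y1) by nra.
  unfold F. fold u v.
  rewrite rpow_mul by lra.
  rewrite (rpow_sq (lam * _)) by nra.
  apply Rle_trans with (rpow ((xi+eta*t)^2) (p/2) + rpow (xi ^ 2 + eta ^ 2 * t ^ 2 - 4 * eta * xi * t / lam ^ 2
                  + 2 * eta * xi * t) (p/2)).
  - assert (hm : 0 < 1/lam^2 <= 1/2).
    { split. apply Rdiv_lt_0_compat; nra.
      apply (Rmult_le_reg_r (lam^2)); [nra|]. unfold Rdiv. rewrite Rmult_assoc, Rinv_l; nra. }
    assert (eG : 4 * eta * xi * t / lam ^ 2 = 4 * xi * (eta*t) * (1/lam^2)) by (field; lra).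
    assert (hab : 0 <= xi * (eta*t)) by nra.
    apply core.
    + lra.
    + rewrite eG.
      assert (xi*(eta*t)*(1/lam^2) <= xi*(eta*t)*(1/2)) by (apply Rmult_le_compat_l; lra).
      assert (0 <= xi*(eta*t)*(1/lam^2)) by (apply Rmult_le_pos; lra).
      assert (eta^2*t^2 = (eta*t)^2) by ring. assert (0 < xi^2) by nra.
      assert (0 <= (eta*t)^2) by nra. assert ((xi+eta*t)^2 = xi^2 + (eta*t)^2 + 2*xi*(eta*t)) by ring.
      assert (2*eta*xi*t = 2*(xi*(eta*t))) by ring.
      split; lra.
    + split; [apply pow2_ge_0|]. apply pow_incr. split; [apply Rmult_le_pos; lra|].
      assert (xi * (lam*x1) <= xi * 1) by (apply Rmult_le_compat_l; lra).
      assert ((eta*t) * (lam*y1) <= (eta*t) * 1) by (apply Rmult_le_compat_l; lra).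
      nra.
    + assert (hxy : 0 <= x1*y1) by nra.
      assert (u*v <= 1) by nra.
      assert (xi*(eta*t)*(u*v) <= xi*(eta*t)*1) by (apply Rmult_le_compat_l; lra).
      assert (xi*(eta*t)*(x1*y1) >= 0) by nra.
      nra.
    + pose proof (key xi (eta*t) lam x1 y1 (u*v) ltac:(lra) hb ltac:(lra) hl2 ltac:(lra) hlx ltac:(lra) hly huv) as K.
      replace ((lam * (xi * x1 + eta * t * y1)) ^ 2) with (lam^2 * (xi * x1 + eta * t * y1)^2) by ring.
      replace (xi ^ 2 + eta ^ 2 * t ^ 2 - 2 * eta * xi * t * x1 * y1 + 2 * eta * xi * t * u * v)
        with (xi^2 + (eta*t)^2 - 2*xi*(eta*t)*x1*y1 + 2*xi*(eta*t)*(u*v)) by ring.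
      replace (xi ^ 2 + eta ^ 2 * t ^ 2 - 4 * eta * xi * t / lam ^ 2 + 2 * eta * xi * t)
        with (xi^2 + (eta*t)^2 - 4*xi*(eta*t)/lam^2 + 2*xi*(eta*t)) by (field; lra).
      exact K.
  - rewrite <- rpow_sq by nra.
    eapply Rle_trans; [|apply Rmax_r]. apply Rmax_l.
Qed.
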